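(* Let $q$ be a power of a prime $p\ge 5$ and let $a\in\mathbb F_q$ be such that $f=X^6+X^5+a\in\mathbb F_q[X]$ is irreducible. If $\prod_{m\in\{2,3,6\}}\theta_{6,m}(1,0,0,0,0,a)\ne 0$ (evaluated in $\mathbb F_q$), then $f$ is normal over $\mathbb F_q$.
   Context: A monic irreducible polynomial of degree $n$ over $\mathbb F_q$ is called normal if its roots are linearly independent over $\mathbb F_q$. Let $\epsilon_m=e^{2\pi\sqrt{-1}/m}$ and $\Psi_m(X_0,\dots,X_{m-1})=\prod_{i\in(\mathbb Z/m\mathbb Z)^\times}\bigl(\sum_{j\in\mathbb Z/m\mathbb Z}\epsilon_m^{ij}X_j\bigr)\in\mathbb Z[X_0,\dots,X_{m-1}]$. For $m\mid n$ put $Y_{n,i}=\sum_{j=0}^{n/m-1}X_{i+mj}$ for $0\le i\le m-1$. Let the symmetric group $S_n$ act on $\mathbb Z[X_0,\dots,X_{n-1}]$ by permuting the indeterminates, and define $\Theta_{n,m}=\prod_\phi\phi\bigl(\Psi_m(Y_{n,0},\dots,Y_{n,m-1})\bigr)$, where $\phi$ runs over a left transversal of the stabilizer of $\Psi_m(Y_{n,0},\dots,Y_{n,m-1})$ in $S_n$; this is a symmetric polynomial in $\mathbb Z[X_0,\dots,X_{n-1}]$. Let $\theta_{n,m}\in\mathbb Z[s_1,\dots,s_n]$ be its symmetric reduction, i.e. the unique polynomial with $\Theta_{n,m}(X_0,\dots,X_{n-1})=\theta_{n,m}(s_1,\dots,s_n)$, where $s_i$ is the $i$-th elementary symmetric polynomial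 in $X_0,\dots,X_{n-1}$. Evaluation of $\theta_{n,m}$ at elements of $\mathbb F_q$ is done after reducing its integer coefficients modulo $p$. Here $n=6$. *)

(* Defs.v *)
From HB Require Import structures.
From mathcomp Require Import all_boot all_order all_algebra all_fingroup all_field.
From mathcomp Require Import mpoly.
Set Implicit Arguments. Unset Strict Implicit. Unset Printing Implicit Defensive.
Import GRing.Theory.
Local Open Scope ring_scope.

(* A fixed primitive m-th root of unity in algC (m > 0).  Psi_m does not
   depend on which primitive root is chosen. *)
Definition eps (m : nat) : algC :=
  if m is k.+1 then sval (C_prim_root_exists (ltn0Sn k)) else 1.

Definition Psi (m : nat) : {mpoly algC[m]} :=
  \prod_(i < m | coprime i m) \sum_(j < m) (eps m ^+ (i * j)) *: 'X_j.

Definition Yv (n m i : nat) : {mpoly algC[n]} :=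
  \sum_(j < n %/ m)
     (if (insub (i + m * j)%N : option 'I_n) is Some k then 'X_k else 0).

Definition PsiY (n m : nat) : {mpoly algC[n]} :=
  Psi m \mPo [tuple Yv n m i | i < m].

(* Theta_{n,m}: product of the distinct images of PsiY under S_n,
   i.e. product of phi(PsiY) over a left transversal of its stabilizer. *)
Definition Theta (n m : nat) : {mpoly algC[n]} :=
  \prod_(Q <- undup [seq msym s (PsiY n m) | s : 'S_n]) Q.

(* t is the symmetric reduction theta_{n,m} of Theta_{n,m}: an integer
   polynomial with t(s_1,...,s_n) = Theta_{n,m}. *)
Definition is_theta (n m : nat) (t : {mpoly int[n]}) : Prop :=
  map_mpoly (fun z : int => z%:~R : algC) t \mPo [tuple mesym n algC i.+1 | i < n]
  = Theta n m.
Arguments is_theta : clear implicits.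

Definition evalZ (F : nzRingType) (n : nat) (t : {mpoly int[n]}) (v : 'I_n -> F) : F :=
  (map_mpoly (fun z : int => z%:~R : F) t).@[v].

Definition normal_poly (F : fieldType) (f : {poly F}) : Prop :=
  [/\ f \is monic, irreducible_poly f &
   forall (L : fieldExtType F) (rs : seq L),
     map_poly (in_alg L) f = \prod_(x <- rs) ('X - x%:P) -> free rs].

(* Main.v *)
Require Import Defs.
From HB Require Import structures.
From mathcomp Require Import all_boot all_order all_algebra all_fingroup all_field.
From mathcomp Require Import all_solvable.
From mathcomp Require Import mpoly.
From mathcomp Require Import ring zify.
Import GRing.Theory.
Local Open Scope ring_scope.

Section Q.
Variable R : comNzRingType.
Definition Q2 (x0 x1 x2 x3 x4 x5 : R) := x0 + x2 + x4 - (x1 + x3 + x5).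
Definition Q3 (x0 x1 x2 x3 x4 x5 : R) :=
  (x0+x3)*(x0+x3) + (x1+x4)*(x1+x4) + (x2+x5)*(x2+x5)
  - (x0+x3)*(x1+x4) - (x0+x3)*(x2+x5) - (x1+x4)*(x2+x5).
Definition Q6 (x0 x1 x2 x3 x4 x5 : R) :=
  x0*x0 + x1*x1 + x2*x2 + x3*x3 + x4*x4 + x5*x5
  + (x0*x1 + x1*x2 + x2*x3 + x3*x4 + x4*x5 + x5*x0)
  - (x0*x2 + x1*x3 + x2*x4 + x3*x5 + x4*x0 + x5*x1)
  - (x0*x3 + x1*x4 + x2*x5) - (x0*x3 + x1*x4 + x2*x5).

Lemma gen2 (z x0 x1 x2 x3 x4 x5 : R) : z = -1 ->
  (z ^+ 0 * (x0 + x2 + x4) + (z ^+ 1 * (x1 + x3 + x5) + 0)) * 1 = Q2 x0 x1 x2 x3 x4 x5.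
Proof. by move=> ->; rewrite /Q2; ring. Qed.

Lemma gen3 (z x0 x1 x2 x3 x4 x5 : R) : z ^+ 2 + z + 1 = 0 ->
  (z ^+ 0 * (x0 + x3) + (z ^+ 1 * (x1 + x4) + (z ^+ 2 * (x2 + x5) + 0))) *
  ((z ^+ 0 * (x0 + x3) + (z ^+ 2 * (x1 + x4) + (z ^+ 4 * (x2 + x5) + 0))) * 1)
  = Q3 x0 x1 x2 x3 x4 x5.
Proof.
move=> h; rewrite /Q3.
set Y0 := x0 + x3; set Y1 := x1 + x4; set Y2 := x2 + x5.
apply/eqP; rewrite -subr_eq0; apply/eqP.
transitivity ((z ^+ 2 + z + 1) * (-Y2*Y2 + Y1*Y2 - Y1*Y1 + Y0*Y2 + Y0*Y1 + z*Y2*Y2 - z*Y1*Y2 + z*Y1*Y1 - z*Y0*Y2 + z*z*Y0*Y2 - z*z*z*Y2*Y2 + z*z*z*Y1*Y2 + z*z*z*z*Y2*Y2)); first by ring.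
by rewrite h mul0r.
Qed.

Lemma gen6 (z x0 x1 x2 x3 x4 x5 : R) : z ^+ 2 - z + 1 = 0 ->
  (z ^+ 0 * x0 + (z ^+ 1 * x1 + (z ^+ 2 * x2 + (z ^+ 3 * x3 + (z ^+ 4 * x4 + (z ^+ 5 * x5 + 0)))))) *
  ((z ^+ 0 * x0 + (z ^+ 5 * x1 + (z ^+ 10 * x2 + (z ^+ 15 * x3 + (z ^+ 20 * x4 + (z ^+ 25 * x5 + 0)))))) * 1)
  = Q6 x0 x1 x2 x3 x4 x5.
Proof.
move=> h.
have h6 : z ^+ 6 = 1.
  apply/eqP; rewrite -subr_eq0; apply/eqP.
  transitivity ((z ^+ 2 - z + 1) * (z ^+ 4 + z ^+ 3 - z - 1)); first by ring.
  by rewrite h mul0r.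
have r k j t : (k = j + 6 * t)%N -> z ^+ k = z ^+ j by move=> ->; rewrite exprD exprM h6 expr1n mulr1.
rewrite (r 10 4 1) // (r 15 3 2) // (r 20 2 3) // (r 25 1 4) // /Q6.
apply/eqP; rewrite -subr_eq0; apply/eqP.
transitivity ((z ^+ 2 - z + 1) * (-x5*x5 - x4*x5 - x4*x4 + x3*x5 - x3*x4 - x3*x3 + (2)*x2*x5 + x2*x4 - x2*x3 - x2*x2 + x1*x5 + (2)*x1*x4 + x1*x3 - x1*x2 - x1*x1 - x0*x5 + x0*x4 + (2)*x0*x3 + x0*x2 - x0*x1 - z*x5*x5 - z*x4*x5 - z*x4*x4 + z*x3*x5 - z*x3*x4 - z*x3*x3 + (2)*z*x2*x5 + z*x2*x4 - z*x2*x3 - z*x2*x2 + z*x1*x5 + (2)*z*x1*x4 + z*x1*x3 - z*x1*x2 - z*x1*x1 + z*x0*x4 + (2)*z*x0*x3 + z*x0*x2 + z*z*x1*x5 + z*z*x0*x5 + z*z*x0*x4 + z*z*x0*x2 + z*z*x0*x1 + z*z*z*x5*x5 + z*z*z*x4*x5 + z*z*z*x4*x4 - z*z*z*x3*x5 + z*z*z*x3*x4 + z*z*z*x3*x3 - z*z*z*x2*x5 - z*z*z*x2*x4 + z*z*z*x2*x3 + z*z*z*x2*x2 - z*z*z*x1*x4 - z*z*z*x1*x3 + z*z*z*x1*x2 + z*z*z*x1*x1 + z*z*z*x0*x5 + z*z*z*x0*x1 + z*z*z*z*x5*x5 + z*z*z*z*x4*x5 + z*z*z*z*x4*x4 + z*z*z*z*x3*x4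 + z*z*z*z*x3*x3 - z*z*z*z*x2*x5 + z*z*z*z*x2*x3 + z*z*z*z*x2*x2 - z*z*z*z*x1*x5 - z*z*z*z*x1*x4 + z*z*z*z*x1*x2 + z*z*z*z*x1*x1 + z*z*z*z*z*x4*x5 + z*z*z*z*z*x3*x5 + z*z*z*z*z*x3*x4 + z*z*z*z*z*x2*x4 + z*z*z*z*z*x2*x3 - z*z*z*z*z*x1*x5 + z*z*z*z*z*x1*x3 + z*z*z*z*z*x1*x2 + z*z*z*z*z*z*x3*x5 + z*z*z*z*z*z*x2*x5 + z*z*z*z*z*z*x2*x4 + z*z*z*z*z*z*x1*x4 + z*z*z*z*z*z*x1*x3 + z*z*z*z*z*z*z*x2*x5 + z*z*z*z*z*z*z*x1*x5 + z*z*z*z*z*z*z*x1*x4 + z*z*z*z*z*z*z*z*x1*x5)); first by ring.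
by rewrite h mul0r.
Qed.
End Q.
Arguments Q2 {R}. Arguments Q3 {R}. Arguments Q6 {R}.
Section Lin.
Variable L : fieldType.

Lemma detz (D d : L) : D != 0 -> D * d = 0 -> d = 0.
Proof. by move=> hD /eqP; rewrite mulf_eq0 (negbTE hD) /= => /eqP. Qed.

Lemma sysA (a0 a1 a2 d0 d1 d2 : L) :
  d0 * a0 + d1 * a1 + d2 * a2 = 0 ->
  d0 * a1 + d1 * a2 + d2 * a0 = 0 ->
  d0 * a2 + d1 * a0 + d2 * a1 = 0 ->
  (a0 + a1 + a2) * (a0*a0 + a1*a1 + a2*a2 - a0*a1 - a0*a2 - a1*a2) != 0 ->
  [/\ d0 = 0, d1 = 0 & d2 = 0].
Proof.
move=> h0 h1 h2 hD.
have hD' : - ((a0 + a1 + a2) * (a0*a0 + a1*a1 + a2*a2 - a0*a1 - a0*a2 - a1*a2)) != 0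
  by rewrite oppr_eq0.
set D := - _ in hD'.
split; apply: (@detz D)=> //.
- transitivity ((a1*a2 - a0*a0) * (d0 * a0 + d1 * a1 + d2 * a2)
   + (-a1*a1 + a0*a2) * (d0 * a1 + d1 * a2 + d2 * a0)
   + (-a2*a2 + a0*a1) * (d0 * a2 + d1 * a0 + d2 * a1)); first by rewrite /D; ring.
  by rewrite h0 h1 h2; ring.
- transitivity ((-a1*a1 + a0*a2) * (d0 * a0 + d1 * a1 + d2 * a2)
   + (-a2*a2 + a0*a1) * (d0 * a1 + d1 * a2 + d2 * a0)
   + (a1*a2 - a0*a0) * (d0 * a2 + d1 * a0 + d2 * a1)); first by rewrite /D; ring.
  by rewrite h0 h1 h2; ring.
- transitivity ((-a2*a2 + a0*a1) * (d0 * a0 + d1 * a1 + d2 * a2)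
   + (a1*a2 - a0*a0) * (d0 * a1 + d1 * a2 + d2 * a0)
   + (-a1*a1 + a0*a2) * (d0 * a2 + d1 * a0 + d2 * a1)); first by rewrite /D; ring.
  by rewrite h0 h1 h2; ring.
Qed.

Lemma sysB (a0 a1 a2 d0 d1 d2 : L) :
  d0 * a0 + d1 * a1 + d2 * a2 = 0 ->
  d0 * a1 + d1 * a2 - d2 * a0 = 0 ->
  d0 * a2 - d1 * a0 - d2 * a1 = 0 ->
  (a0 - a1 + a2) * (a0*a0 + a1*a1 + a2*a2 + a0*a1 + a1*a2 - a0*a2) != 0 ->
  [/\ d0 = 0, d1 = 0 & d2 = 0].
Proof.
move=> h0 h1 h2 hD.
have hD' : - ((a0 - a1 + a2) * (a0*a0 + a1*a1 + a2*a2 + a0*a1 + a1*a2 - a0*a2)) != 0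
  by rewrite oppr_eq0.
set D := - _ in hD'.
split; apply: (@detz D)=> //.
- transitivity ((-a1*a2 - a0*a0) * (d0 * a0 + d1 * a1 + d2 * a2)
   + (a1*a1 - a0*a2) * (d0 * a1 + d1 * a2 - d2 * a0)
   + (-a2*a2 - a0*a1) * (d0 * a2 - d1 * a0 - d2 * a1)); first by rewrite /D; ring.
  by rewrite h0 h1 h2; ring.
- transitivity ((a1*a1 - a0*a2) * (d0 * a0 + d1 * a1 + d2 * a2)
   + (-a2*a2 - a0*a1) * (d0 * a1 + d1 * a2 - d2 * a0)
   + (a1*a2 + a0*a0) * (d0 * a2 - d1 * a0 - d2 * a1)); first by rewrite /D; ring.
  by rewrite h0 h1 h2; ring.
- transitivity ((-a2*a2 - a0*a1) * (d0 * a0 + d1 * a1 + d2 * a2)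
   + (a1*a2 + a0*a0) * (d0 * a1 + d1 * a2 - d2 * a0)
   + (-a1*a1 + a0*a2) * (d0 * a2 - d1 * a0 - d2 * a1)); first by rewrite /D; ring.
  by rewrite h0 h1 h2; ring.
Qed.

Lemma lin6 (y0 y1 y2 y3 y4 y5 c0 c1 c2 c3 c4 c5 : L) :
  (2 : L) != 0 -> y0 + y1 + y2 + y3 + y4 + y5 != 0 ->
  Q2 y0 y1 y2 y3 y4 y5 != 0 -> Q3 y0 y1 y2 y3 y4 y5 != 0 -> Q6 y0 y1 y2 y3 y4 y5 != 0 ->
  c0 * y0 + c1 * y1 + c2 * y2 + c3 * y3 + c4 * y4 + c5 * y5 = 0 ->
  c0 * y1 + c1 * y2 + c2 * y3 + c3 * y4 + c4 * y5 + c5 * y0 = 0 ->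
  c0 * y2 + c1 * y3 + c2 * y4 + c3 * y5 + c4 * y0 + c5 * y1 = 0 ->
  c0 * y3 + c1 * y4 + c2 * y5 + c3 * y0 + c4 * y1 + c5 * y2 = 0 ->
  c0 * y4 + c1 * y5 + c2 * y0 + c3 * y1 + c4 * y2 + c5 * y3 = 0 ->
  c0 * y5 + c1 * y0 + c2 * y1 + c3 * y2 + c4 * y3 + c5 * y4 = 0 ->
  [/\ c0 = 0, c1 = 0 & c2 = 0] /\ [/\ c3 = 0, c4 = 0 & c5 = 0].
Proof.
move=> h2 hS h2' h3 h6 e0 e1 e2 e3 e4 e5.
have [d0 d1 d2] : [/\ c0 + c3 = 0, c1 + c4 = 0 & c2 + c5 = 0].
  apply: (@sysA (y0 + y3) (y1 + y4) (y2 + y5)).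
  - by rewrite -[RHS](addr0 0) -{1}e0 -e3; ring.
  - by rewrite -[RHS](addr0 0) -{1}e1 -e4; ring.
  - by rewrite -[RHS](addr0 0) -{1}e2 -e5; ring.
  - rewrite mulf_eq0 negb_or; apply/andP; split.
      by move: hS; apply: contra => /eqP h; apply/eqP; rewrite -h; ring.
    by move: h3; rewrite /Q3.
have [f0 f1 f2] : [/\ c0 - c3 = 0, c1 - c4 = 0 & c2 - c5 = 0].
  apply: (@sysB (y0 - y3) (y1 - y4) (y2 - y5)).
  - by rewrite -[RHS](subr0 0) -{1}e0 -e3; ring.
  - by rewrite -[RHS](subr0 0) -{1}e1 -e4; ring.
  - by rewrite -[RHS](subr0 0) -{1}e2 -e5; ring.
  - have -> : (y0 - y3 - (y1 - y4) + (y2 - y5)) *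
      ((y0 - y3) * (y0 - y3) + (y1 - y4) * (y1 - y4) + (y2 - y5) * (y2 - y5) +
       (y0 - y3) * (y1 - y4) + (y1 - y4) * (y2 - y5) - (y0 - y3) * (y2 - y5))
      = Q2 y0 y1 y2 y3 y4 y5 * Q6 y0 y1 y2 y3 y4 y5 by rewrite /Q2 /Q6; ring.
    by rewrite mulf_neq0.
have k (u v : L) : u + v = 0 -> u - v = 0 -> u = 0 /\ v = 0.
  move=> hp hm; have hu : 2 * u = 0 by rewrite (_ : 2 * u = (u + v) + (u - v)); [rewrite hp hm addr0 | ring].
  have u0 := @detz 2 u h2 hu; split => //; by move: hp; rewrite u0 add0r.
have [-> ->] := k _ _ d0 f0; have [-> ->] := k _ _ d1 f1; have [-> ->] := k _ _ d2 f2.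
by [].
Qed.
End Lin.

Definition Xv (R : nzRingType) (k : nat) : {mpoly R[6]} := 'X_(inord k).

Lemma insubX (R : nzRingType) k : (k < 6)%N ->
  (if (insub k : option 'I_6) is Some o then 'X_o else 0) = Xv R k.
Proof.
move=> hk; case: insubP => [o _ ho|]; last by rewrite hk.
by rewrite /Xv; have -> : o = inord k by apply: val_inj; rewrite /= inordK // -ho.
Qed.

Lemma tupnth (R : nzRingType) m (j : 'I_m) (f : 'I_m -> {mpoly R[6]}) :
  [tuple f i | i < m]`_j = f j.
Proof. by rewrite -tnth_nth tnth_mktuple. Qed.

Lemma Yv2 i : (i < 2)%N -> Yv 6 2 i = Xv _ i + Xv _ (i + 2) + Xv _ (i + 4).
Proof.
move=> hi; rewrite /Yv (_ : (6 %/ 2 = 3)%N) // !big_ord_recr big_ord0 /= add0r.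
by rewrite !insubX //; case: i hi => [|[]].
Qed.
Lemma Yv3 i : (i < 3)%N -> Yv 6 3 i = Xv _ i + Xv _ (i + 3).
Proof.
move=> hi; rewrite /Yv (_ : (6 %/ 3 = 2)%N) // !big_ord_recr big_ord0 /= add0r.
by rewrite !insubX //; case: i hi => [|[|[]]].
Qed.
Lemma Yv6 i : (i < 6)%N -> Yv 6 6 i = Xv _ i.
Proof.
move=> hi; rewrite /Yv (_ : (6 %/ 6 = 1)%N) // big_ord1 /=.
by rewrite insubX ?addn0.
Qed.

Lemma PsiYE m : (0 < m)%N -> PsiY 6 m =
  \prod_(0 <= i < m | coprime i m) \sum_(0 <= j < m) (eps m ^+ (i * j))%:MP * Yv 6 m j.
Proof.
move=> hm.
rewrite /PsiY /Psi rmorph_prod /= big_mkord; apply: eq_bigr => i _.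
rewrite raddf_sum /= big_mkord; apply: eq_bigr => j _.
by rewrite comp_mpolyZ comp_mpolyXU tupnth mul_mpolyC.
Qed.

Lemma eps_prim k : k.+1.-primitive_root (eps k.+1).
Proof. exact: (svalP (C_prim_root_exists _)). Qed.

Lemma eps2 : eps 2 = -1.
Proof.
have p := eps_prim 1; set z := eps 2 in p *.
have h2 := prim_expr_order p.
have h1 : z != 1 by rewrite -[z]expr1 -(prim_order_dvd p).
have e : (z - 1) * (z + 1) = z ^+ 2 - 1 by ring.
have : (z - 1) * (z + 1) = 0 by rewrite e h2 subrr.
by move/eqP; rewrite mulf_eq0 subr_eq0 (negbTE h1) /= addr_eq0 => /eqP.
Qed.

Lemma eps3 : eps 3 ^+ 2 + eps 3 + 1 = 0.
Proof.
have p := eps_prim 2; set z := eps 3 in p *.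
have h3 := prim_expr_order p.
have h1 : z != 1 by rewrite -[z]expr1 -(prim_order_dvd p).
have e : (z - 1) * (z ^+ 2 + z + 1) = z ^+ 3 - 1 by ring.
have : (z - 1) * (z ^+ 2 + z + 1) = 0 by rewrite e h3 subrr.
by move/eqP; rewrite mulf_eq0 subr_eq0 (negbTE h1) /= => /eqP.
Qed.

Lemma eps6 : eps 6 ^+ 2 - eps 6 + 1 = 0.
Proof.
have p := eps_prim 5; set z := eps 6 in p *.
have h6 := prim_expr_order p.
have h2 : z ^+ 2 != 1 by rewrite -(prim_order_dvd p).
have h3 : z ^+ 3 != 1 by rewrite -(prim_order_dvd p).
have h1 : z + 1 != 0.
  apply/negP; rewrite addr_eq0 => /eqP hz; move: h2; by rewrite hz sqrrN expr1n eqxx.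
have e : (z ^+ 3 - 1) * ((z + 1) * (z ^+ 2 - z + 1)) = z ^+ 6 - 1 by ring.
have : (z ^+ 3 - 1) * ((z + 1) * (z ^+ 2 - z + 1)) = 0 by rewrite e h6 subrr.
by move/eqP; rewrite !mulf_eq0 subr_eq0 (negbTE h3) (negbTE h1) /= => /eqP.
Qed.

Definition P2 (R : comNzRingType) := Q2 (Xv R 0) (Xv R 1) (Xv R 2) (Xv R 3) (Xv R 4) (Xv R 5).
Definition P3 (R : comNzRingType) := Q3 (Xv R 0) (Xv R 1) (Xv R 2) (Xv R 3) (Xv R 4) (Xv R 5).
Definition P6 (R : comNzRingType) := Q6 (Xv R 0) (Xv R 1) (Xv R 2) (Xv R 3) (Xv R 4) (Xv R 5).

Lemma PsiY_2 : PsiY 6 2 = P2 algC.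
Proof.
rewrite PsiYE //; set e := eps 2; rewrite /index_iota /= !big_cons !big_nil /= !Yv2 //.
rewrite !rmorphXn; apply: gen2; by rewrite /e eps2 rmorphN1.
Qed.

Lemma PsiY_3 : PsiY 6 3 = P3 algC.
Proof.
rewrite PsiYE //; set e := eps 3; rewrite /index_iota /= !big_cons !big_nil /= !Yv3 //.
rewrite !rmorphXn; apply: gen3; have := congr1 (@mpolyC 6 _) eps3; by rewrite !rmorphD rmorphXn rmorph1 rmorph0.
Qed.

Lemma PsiY_6 : PsiY 6 6 = P6 algC.
Proof.
rewrite PsiYE //; set e := eps 6; rewrite /index_iota /= !big_cons !big_nil /= !Yv6 //.
rewrite !rmorphXn; apply: gen6; have := congr1 (@mpolyC 6 _) eps6; by rewrite !rmorphD rmorphN rmorphXn rmorph1 rmorph0.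
Qed.

Lemma mpoly_int_rmorph_eq n (R : comNzRingType) (f g : {rmorphism {mpoly int[n]} -> R}) :
  (forall i, f 'X_i = g 'X_i) -> f =1 g.
Proof.
move=> h p; rewrite (mpolyE p) !rmorph_sum; apply: eq_bigr => m _.
rewrite -mul_mpolyC !rmorphM; congr (_ * _).
  have -> : (p@_m)%:MP = (p@_m)%:~R :> {mpoly int[n]}.
    by rewrite -[in LHS](intz (p@_m)) rmorph_int.
  by rewrite !rmorph_int.
by rewrite mpolyXE_id !rmorph_prod; apply: eq_bigr => i _; rewrite !rmorphXn h.
Qed.

Lemma map_mpoly_inj n (R S : nzRingType) (f : {rmorphism R -> S}) :
  injective f -> injective (map_mpoly (n := n) f).
Proof.
move=> fi p q h; apply/mpolyP => m; apply: fi.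
by rewrite -!mcoeff_map_mpoly h.
Qed.

Lemma map_mesym n k (R S : comNzRingType) (f : {rmorphism R -> S}) :
  map_mpoly f (mesym n R k) = mesym n S k.
Proof.
by rewrite !mesymE raddf_sum /=; apply: eq_bigr => h _; rewrite map_mpolyX.
Qed.

Lemma msym_map n (R S : nzRingType) (f : {rmorphism R -> S}) (s : 'S_n) p :
  msym s (map_mpoly f p) = map_mpoly f (msym s p).
Proof. by apply/mpolyP => m; rewrite mcoeff_sym !mcoeff_map_mpoly mcoeff_sym. Qed.

Notation iC := (fun z : int => z%:~R : algC).
Definition tupM (R : comNzRingType) : 6.-tuple {mpoly R[6]} := [tuple mesym 6 R i.+1 | i < 6].

Lemma iC_inj : injective iC.
Proof. by move=> x y /= /eqP; rewrite eqr_int => /eqP. Qed.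

Lemma theta_int m t P : PsiY 6 m = map_mpoly iC P -> is_theta 6 m t ->
  t \mPo tupM int = \prod_(Q <- undup [seq msym s P | s : 'S_6]) Q.
Proof.
move=> hP ht; apply: (@map_mpoly_inj 6 int algC _ iC_inj).
rewrite map_mpoly_comp; last exact: iC_inj.
have -> : [tuple of [seq map_mpoly iC q | q <- tupM int]] = tupM algC.
  by apply: eq_from_tnth => i; rewrite tnth_map !tnth_mktuple map_mesym.
rewrite [LHS]ht /Theta hP rmorph_prod /=.
have -> : [seq msym s (map_mpoly iC P) | s : 'S_6] = map (map_mpoly iC) [seq msym s P | s : 'S_6].
  by rewrite -map_comp; apply: eq_map => s /=; rewrite msym_map.
by rewrite undup_map_inj ?big_map //; apply: map_mpoly_inj; exact: iC_inj.
Qed.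

Notation RM f := (GRing.RMorphism.clone _ _ f _).

Lemma eval_theta (F : fieldType) (L : fieldExtType F) (w : 'I_6 -> L) (v : 'I_6 -> F) m t P :
  PsiY 6 m = map_mpoly iC P -> is_theta 6 m t ->
  (forall i : 'I_6, (mesym 6 L i.+1).@[w] = in_alg L (v i)) ->
  (map_mpoly (fun z : int => z%:~R : L) P).@[w] = 0 -> evalZ t v = 0.
Proof.
move=> hP ht hv hP0.
have E := @theta_int m t P hP ht.
have h1 : RM (meval w \o map_mpoly (fun z : int => z%:~R : L) \o comp_mpoly (tupM int)) =1
   RM (meval (fun i => in_alg L (v i)) \o map_mpoly (fun z : int => z%:~R : L)).
  apply: mpoly_int_rmorph_eq => i /=.
  rewrite comp_mpolyXU map_mpolyX mevalXU -tnth_nth tnth_mktuple.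
  by rewrite map_mesym hv.
have h2 : RM (meval (fun i => in_alg L (v i)) \o map_mpoly (fun z : int => z%:~R : L)) =1
   RM (in_alg L \o meval v \o map_mpoly (fun z : int => z%:~R : F)).
  by apply: mpoly_int_rmorph_eq => i /=; rewrite !map_mpolyX !mevalXU.
have : in_alg L (evalZ t v) = 0.
  rewrite /evalZ; move: (h2 t) => /= <-.
  move: (h1 t) => /= <-.
  rewrite E /= !rmorph_prod (big_rem P) /=; first by rewrite (_ : (map_mpoly _ P).@[w] = 0 :> L) ?mul0r //; exact: hP0.
  rewrite mem_undup; apply/mapP; exists 1%g; first by rewrite mem_enum.
  by rewrite msym1m.
by move/eqP; rewrite fmorph_eq0 => /eqP.
Qed.

Lemma natfact (Q A B : nat) : (B <= Q -> Q <= A -> 2 * A <= B -> 0 < A -> False)%N.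
Proof. lia. Qed.

Section Frob.
Variables (F : finFieldType) (L : fieldExtType F) (p : nat) (hchar : p \in [pchar F]).

Local Notation q := #|F|.

Lemma charL : p \in [pchar L].
Proof. by rewrite (pchar_lalg L). Qed.

Lemma qnat n : [pchar L].-nat (q ^ n)%N.
Proof.
rewrite (eq_pnat _ (pcharf_eq charL)).
rewrite pnatX; apply/orP; left.
have := abelem_pgroup (fin_ring_pchar_abelem hchar).
by rewrite /pgroup cardsT.
Qed.

Lemma powD n (y z : L) : (y + z) ^+ (q ^ n)%N = y ^+ (q ^ n)%N + z ^+ (q ^ n)%N.
Proof. exact: exprDn_pchar (qnat n). Qed.

Lemma q_gt0 n : (0 < q ^ n)%N.
Proof. by rewrite expn_gt0 (ltn_trans _ (finNzRing_gt1 F)). Qed.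

Lemma powN n (y : L) : (- y) ^+ (q ^ n)%N = - y ^+ (q ^ n)%N.
Proof.
apply/eqP; rewrite -subr_eq0 opprK -powD addNr expr0n.
by rewrite eqn0Ngt q_gt0.
Qed.

Lemma powC n (c : F) : (in_alg L c) ^+ (q ^ n)%N = in_alg L c.
Proof.
rewrite -rmorphXn; congr (in_alg L _).
elim: n => [|n IH]; first by rewrite expn0 expr1.
by rewrite expnSr exprM IH expf_card.
Qed.

Lemma pow_inj n (y z : L) : y ^+ (q ^ n)%N = z ^+ (q ^ n)%N -> y = z.
Proof.
move=> h; apply/eqP; rewrite -subr_eq0.
have : (y - z) ^+ (q ^ n)%N == 0 by rewrite powD powN h subrr.
by rewrite expf_eq0 q_gt0.
Qed.

Lemma powM n (y z : L) : (y * z) ^+ (q ^ n)%N = y ^+ (q ^ n)%N * z ^+ (q ^ n)%N.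
Proof. exact: exprMn. Qed.

Lemma powpow i j (y : L) : (y ^+ (q ^ i)%N) ^+ (q ^ j)%N = y ^+ (q ^ (i + j))%N.
Proof. by rewrite -exprM expnD. Qed.

Lemma pow_sum n (I : Type) (r : seq I) (P : pred I) (G : I -> L) :
  (\sum_(i <- r | P i) G i) ^+ (q ^ n)%N = \sum_(i <- r | P i) (G i) ^+ (q ^ n)%N.
Proof.
apply: (big_morph (fun y => y ^+ (q ^ n)%N)) => [y z|]; first exact: powD.
by rewrite expr0n eqn0Ngt q_gt0.
Qed.


Lemma size_f (R : nzRingType) (c : R) : size ('X^6 + 'X^5 + c%:P : {poly R}) = 7%N.
Proof.
rewrite -addrA size_polyDl ?size_polyXn // size_polyDl ?size_polyXn //.
by rewrite (leq_ltn_trans (size_polyC_leq1 c)).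
Qed.

Lemma lead_f (R : nzRingType) (c : R) : lead_coef ('X^6 + 'X^5 + c%:P : {poly R}) = 1.
Proof.
rewrite -addrA lead_coefDl ?lead_coefXn // size_polyXn size_polyDl ?size_polyXn //.
by rewrite (leq_ltn_trans (size_polyC_leq1 c)).
Qed.

Variables (a : F) (hirr : irreducible_poly ('X^6 + 'X^5 + a%:P)).
Variables (x : L) (hx : x ^+ 6 + x ^+ 5 + in_alg L a = 0).

Lemma rootf_map : root (map_poly (in_alg L) ('X^6 + 'X^5 + a%:P)) x.
Proof. by rewrite rootE !rmorphD /= !map_polyXn map_polyC !hornerE hx. Qed.

Lemma coprime_f (g : {poly F}) : g != 0 -> (size g <= 6)%N ->
  coprimep ('X^6 + 'X^5 + a%:P) g.
Proof.
move=> gn0 sg; rewrite coprimep_def; apply/negPn/negP => hs.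
have he := hirr.2 (gcdp _ g) hs (dvdp_gcdl _ g).
have : ('X^6 + 'X^5 + a%:P) %| g by rewrite -(eqp_dvdl _ he) dvdp_gcdr.
move/(dvdp_leq gn0); rewrite size_f => h; by move: sg; rewrite leqNgt h.
Qed.

Definition ev (c : {ffun 'I_6 -> F}) : L := \sum_(i < 6) in_alg L (c i) * x ^+ i.

Lemma ev_inj : injective ev.
Proof.
move=> c c' h.
pose g := \poly_(i < 6) (c (inord i) - c' (inord i)).
suff g0 : g = 0.
  apply/ffunP => i; have := congr1 (fun r : {poly F} => r`_i) g0.
  by rewrite /= coef_poly ltn_ord coef0 inord_val => /eqP; rewrite subr_eq0 => /eqP.
apply/eqP; apply: contraT => gn0.
have cop : coprimep (map_poly (in_alg L) ('X^6 + 'X^5 + a%:P)) (map_poly (in_alg L) g).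
  by rewrite coprimep_map coprime_f // size_poly.
have := coprimep_root cop rootf_map.
rewrite (horner_coef_wide (n:=6) x) ?size_map_poly ?size_poly //.
rewrite (eq_bigr (fun i : 'I_6 => in_alg L (c i) * x ^+ i - in_alg L (c' i) * x ^+ i)).
  by rewrite sumrB -/(ev c) -/(ev c') h subrr eqxx.
by move=> i _; rewrite coef_map coef_poly ltn_ord inord_val -mulrBl -raddfB.
Qed.

Lemma noper d : (0 < d < 6)%N -> x ^+ (q ^ d)%N != x.
Proof.
move=> hd; apply/eqP => hxd.
set Q := (q ^ d)%N in hxd.
have q2 := finNzRing_gt1 F.
have Q2 : (1 < Q)%N.
  rewrite /Q; case: d hd {hxd Q} => [//|d] _.
  by rewrite expnS (leq_trans q2) // leq_pmulr // expn_gt0 (ltn_trans _ q2).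
have sz : size ('X^Q - 'X : {poly L}) = Q.+1.
  by rewrite size_polyDl ?size_polyXn // size_polyN size_polyX ltnS.
have nz : ('X^Q - 'X : {poly L}) != 0 by rewrite -size_poly_eq0 sz.
have roots : all (root ('X^Q - 'X)) [seq ev c | c <- enum {ffun 'I_6 -> F}].
  apply/allP => y /mapP [c _ ->]; rewrite rootE !hornerE /ev.
  rewrite (pow_sum d) subr_eq0; apply/eqP; apply: eq_bigr => i _.
  by rewrite powM // powC // exprAC hxd.
have un : uniq [seq ev c | c <- enum {ffun 'I_6 -> F}].
  by rewrite map_inj_uniq ?enum_uniq //; exact: ev_inj.
have := max_poly_roots nz roots un.
rewrite size_map -cardE card_ffun card_ord sz ltnS => h6.
have h5 : (Q <= q ^ 5)%N by rewrite /Q leq_pexp2l ?(ltn_trans _ q2) //; case/andP: hd.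
have h65 : (2 * q ^ 5 <= q ^ 6)%N by rewrite expnS leq_mul2r q2 orbT.
have h51 : (0 < q ^ 5)%N by rewrite expn_gt0 (ltn_trans _ q2).
exact: (natfact _ _ _ h6 h5 h65 h51).
Qed.

Definition xx k := x ^+ (q ^ k)%N.

Lemma xx0 : xx 0 = x.
Proof. by rewrite /xx expn0 expr1. Qed.

Lemma xx_shift i j : xx i ^+ (q ^ j)%N = xx (i + j).
Proof. exact: powpow. Qed.

Lemma xx_root k : xx k ^+ 6 + xx k ^+ 5 + in_alg L a = 0.
Proof.
have := congr1 (fun z => z ^+ (q ^ k)%N) hx; rewrite /= !powD powC expr0n eqn0Ngt q_gt0 /=.
by rewrite /xx -!exprM ![(_ * (q ^ k))%N]mulnC !exprM.
Qed.

Lemma xx_neq i j : (i < j < 6)%N -> xx i != xx j.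
Proof.
case/andP=> hij hj; apply/eqP => h.
have : x ^+ (q ^ (j - i))%N = x.
  apply: (@pow_inj i); rewrite powpow -/(xx i) h /xx; congr (x ^+ (q ^ _)%N).
  by rewrite subnK // ltnW.
move=> e; have hd' : (0 < j - i < 6)%N by rewrite subn_gt0 hij /= (leq_ltn_trans (leq_subr _ _)).
by move: (noper _ hd'); rewrite e eqxx.
Qed.

Lemma xx6 : xx 6 = x.
Proof.
pose s := [seq xx k | k <- iota 0 7].
have nz : ('X^6 + 'X^5 + (in_alg L a)%:P : {poly L}) != 0 by rewrite -size_poly_eq0 size_f.
have roots : all (root ('X^6 + 'X^5 + (in_alg L a)%:P)) s.
  by apply/allP => y /mapP [k _ ->]; rewrite rootE !hornerE xx_root.
have : ~~ uniq s.
  apply/negP => un; have := max_poly_roots nz roots un.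
  by rewrite size_f size_map size_iota ltnn.
case/(uniqPn x) => i [j [hij]]; rewrite size_map size_iota => hj.
rewrite !(nth_map 0%N) ?size_iota ?(ltn_trans hij) // !nth_iota ?(ltn_trans hij) // !add0n.
move=> h; have [j6|] := ltnP j 6.
  by have := xx_neq i j; rewrite hij j6 h eqxx => /(_ isT).
move=> hj6; have ej : j = 6 by apply/eqP; rewrite eqn_leq hj6 -ltnS hj.
subst j; case: i hij h => [|i] hij h; first by rewrite -h xx0.
have : x ^+ (q ^ (6 - i.+1))%N = x.
  apply: (@pow_inj i.+1); rewrite powpow -/(xx i.+1) h /xx; congr (x ^+ (q ^ _)%N).
  by rewrite subnK // ltnW.
move=> e; have hd' : (0 < 6 - i.+1 < 6)%N by rewrite subn_gt0 hij /= subSS ltnS leq_subr.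
by move: (noper _ hd'); rewrite e eqxx.
Qed.

Lemma two_neq0 : (5 <= p)%N -> (2 : L) != 0.
Proof.
move=> hp; apply/negP => h2.
have : 2%N \in [pchar L] by rewrite inE /= h2.
rewrite (pcharf_eq charL) inE => /eqP e; move: hp; by rewrite -e.
Qed.

End Frob.

Section RQ.
Variables (R S : comNzRingType) (f : {rmorphism R -> S}) (x0 x1 x2 x3 x4 x5 : R).
Lemma rmorph_Q2 : f (Q2 x0 x1 x2 x3 x4 x5) = Q2 (f x0) (f x1) (f x2) (f x3) (f x4) (f x5).
Proof. by rewrite /Q2 !(rmorphB, rmorphD, rmorphM). Qed.
Lemma rmorph_Q3 : f (Q3 x0 x1 x2 x3 x4 x5) = Q3 (f x0) (f x1) (f x2) (f x3) (f x4) (f x5).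
Proof. by rewrite /Q3 !(rmorphB, rmorphD, rmorphM). Qed.
Lemma rmorph_Q6 : f (Q6 x0 x1 x2 x3 x4 x5) = Q6 (f x0) (f x1) (f x2) (f x3) (f x4) (f x5).
Proof. by rewrite /Q6 !(rmorphB, rmorphD, rmorphM). Qed.
End RQ.

Lemma mapP2 (S : comNzRingType) : map_mpoly (fun z : int => z%:~R : S) (P2 int) = P2 S.
Proof. by rewrite /P2 (rmorph_Q2 _ _ (RM (map_mpoly (fun z : int => z%:~R : S)))) /= /Xv !map_mpolyX. Qed.
Lemma mapP3 (S : comNzRingType) : map_mpoly (fun z : int => z%:~R : S) (P3 int) = P3 S.
Proof. by rewrite /P3 (rmorph_Q3 _ _ (RM (map_mpoly (fun z : int => z%:~R : S)))) /= /Xv !map_mpolyX. Qed.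
Lemma mapP6 (S : comNzRingType) : map_mpoly (fun z : int => z%:~R : S) (P6 int) = P6 S.
Proof. by rewrite /P6 (rmorph_Q6 _ _ (RM (map_mpoly (fun z : int => z%:~R : S)))) /= /Xv !map_mpolyX. Qed.

Lemma evP2 (S : comNzRingType) (w : 'I_6 -> S) :
  (P2 S).@[w] = Q2 (w (inord 0)) (w (inord 1)) (w (inord 2)) (w (inord 3)) (w (inord 4)) (w (inord 5)).
Proof. by rewrite /P2 (rmorph_Q2 _ _ (RM (meval w))) /= /Xv !mevalXU. Qed.
Lemma evP3 (S : comNzRingType) (w : 'I_6 -> S) :
  (P3 S).@[w] = Q3 (w (inord 0)) (w (inord 1)) (w (inord 2)) (w (inord 3)) (w (inord 4)) (w (inord 5)).
Proof. by rewrite /P3 (rmorph_Q3 _ _ (RM (meval w))) /= /Xv !mevalXU. Qed.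
Lemma evP6 (S : comNzRingType) (w : 'I_6 -> S) :
  (P6 S).@[w] = Q6 (w (inord 0)) (w (inord 1)) (w (inord 2)) (w (inord 3)) (w (inord 4)) (w (inord 5)).
Proof. by rewrite /P6 (rmorph_Q6 _ _ (RM (meval w))) /= /Xv !mevalXU. Qed.

Lemma PsiY_2' : PsiY 6 2 = map_mpoly iC (P2 int).
Proof. by rewrite mapP2 PsiY_2. Qed.
Lemma PsiY_3' : PsiY 6 3 = map_mpoly iC (P3 int).
Proof. by rewrite mapP3 PsiY_3. Qed.
Lemma PsiY_6' : PsiY 6 6 = map_mpoly iC (P6 int).
Proof. by rewrite mapP6 PsiY_6. Qed.

Lemma size_g (R : nzRingType) (c : R) : size ('X^6 - 'X^5 + c%:P : {poly R}) = 7%N.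
Proof.
rewrite -addrA size_polyDl ?size_polyXn // size_polyDl ?size_polyN ?size_polyXn //.
by rewrite (leq_ltn_trans (size_polyC_leq1 c)).
Qed.

Lemma lead_g (R : nzRingType) (c : R) : lead_coef ('X^6 - 'X^5 + c%:P : {poly R}) = 1.
Proof.
rewrite -addrA lead_coefDl ?lead_coefXn // size_polyXn size_polyDl ?size_polyN ?size_polyXn //.
by rewrite (leq_ltn_trans (size_polyC_leq1 c)).
Qed.

Definition vv {F : nzRingType} (a : F) := fun i : 'I_6 => [:: 1; 0; 0; 0; 0; a]`_i.

Section Main.
Variables (F : finFieldType) (p : nat) (a : F) (hchar : p \in [pchar F]) (hp5 : (5 <= p)%N)
  (hirr : irreducible_poly ('X^6 + 'X^5 + a%:P)) (t2 t3 t6 : {mpoly int[6]})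
  (ht2 : is_theta 6 2 t2) (ht3 : is_theta 6 3 t3) (ht6 : is_theta 6 6 t6)
  (hne : evalZ t2 (vv a) * evalZ t3 (vv a) * evalZ t6 (vv a) != 0).
Variables (L : fieldExtType F) (rs : seq L)
  (hrs : map_poly (in_alg L) ('X^6 + 'X^5 + a%:P) = \prod_(x <- rs) ('X - x%:P)).

Lemma main_free : free rs.
Proof.
have szrs : size rs = 6%N.
  by have := congr1 (fun r : {poly L} => size r) hrs; rewrite /= size_map_poly size_f size_prod_XsubC; case.
have x0in : rs`_0 \in rs by rewrite mem_nth // szrs.
set x := rs`_0 in x0in.
have rootE' (z : L) : root (map_poly (in_alg L) ('X^6 + 'X^5 + a%:P)) z = (z ^+ 6 + z ^+ 5 + in_alg L a == 0).
  by rewrite rootE !rmorphD /= !map_polyXn map_polyC !hornerE.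
have hx : x ^+ 6 + x ^+ 5 + in_alg L a = 0.
  by apply/eqP; rewrite -rootE' hrs root_prod_XsubC.
pose y := xx F L x.
have yneq := xx_neq F L p hchar a hirr x hx.
have y6 : y 6%N = y 0%N by rewrite /y (xx6 F L p hchar a hirr x hx) xx0.
have yroot := xx_root F L p hchar a x hx.
have q0 : (0 < #|F| ^ 1)%N by rewrite expn1 (ltn_trans _ (finNzRing_gt1 F)).
have fy k : y k ^+ (#|F| ^ 1)%N = y k.+1 by rewrite /y xx_shift addn1.
have fy5 : y 5%N ^+ (#|F| ^ 1)%N = y 0%N by rewrite fy y6.
pose X := [tuple y 0%N; y 1%N; y 2%N; y 3%N; y 4%N; y 5%N].
have Xe : (X : seq L) = map y (iota 0 6) by [].
have uX : uniq X.
  rewrite Xe map_inj_in_uniq ?iota_uniq // => i j; rewrite !mem_iota !add0n /y => hi hj e.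
  case: (ltngtP i j) => // h.
    by move: (yneq i j); rewrite h hj e eqxx => /(_ isT).
  by move: (yneq j i); rewrite h hi e eqxx => /(_ isT).
have Xin : {subset X <= rs}.
  move=> z hz; have : z \in map y (iota 0 6) by rewrite -Xe.
  case/mapP => k _ ->.
  by rewrite -root_prod_XsubC -hrs rootE' yroot.
have szX : (size rs <= size X)%N by rewrite szrs size_tuple.
have [eqsz eqX] := uniq_min_size uX Xin szX.
have urs : uniq rs by rewrite (uniq_size_uniq uX eqX) eqsz.
have prm : perm_eq rs X by apply: uniq_perm => // z; rewrite eqX.
rewrite (perm_free prm).
apply/freeP => k hk.
pose c j := in_alg L (k (inord j)).
have iM (u : F) (z : L) : in_alg L u * z = u *: z by rewrite mulr_algl.
have E0 : c 0%N * y 0%N + c 1%N * y 1%N + c 2%N * y 2%N + c 3%N * y 3%N + c 4%N * y 4%N + c 5%N * y 5%N = 0.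
  rewrite -hk (eq_bigr (fun i : 'I_6 => k (inord i) *: X`_i)); last by move=> i _; rewrite inord_val.
  rewrite -(big_mkord xpredT (fun i => k (inord i) *: X`_i)) /index_iota /= !big_cons big_nil /=.
  by rewrite /c !iM addr0 !addrA.
have pD := powD F L p hchar 1.
have pM := @powM F L 1.
have pC := powC F L 1.
have p0 : (0 : L) ^+ (#|F| ^ 1)%N = 0 by rewrite expr0n eqn0Ngt q0.
have E1 : c 0%N * y 1%N + c 1%N * y 2%N + c 2%N * y 3%N + c 3%N * y 4%N + c 4%N * y 5%N + c 5%N * y 0%N = 0.
  by have := congr1 (fun z => z ^+ (#|F| ^ 1)%N) E0; rewrite /= !pD !pM !pC fy5 !fy p0.
have E2 : c 0%N * y 2%N + c 1%N * y 3%N + c 2%N * y 4%N + c 3%N * y 5%N + c 4%N * y 0%N + c 5%N * y 1%N = 0.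
  by have := congr1 (fun z => z ^+ (#|F| ^ 1)%N) E1; rewrite /= !pD !pM !pC fy5 !fy p0.
have E3 : c 0%N * y 3%N + c 1%N * y 4%N + c 2%N * y 5%N + c 3%N * y 0%N + c 4%N * y 1%N + c 5%N * y 2%N = 0.
  by have := congr1 (fun z => z ^+ (#|F| ^ 1)%N) E2; rewrite /= !pD !pM !pC fy5 !fy p0.
have E4 : c 0%N * y 4%N + c 1%N * y 5%N + c 2%N * y 0%N + c 3%N * y 1%N + c 4%N * y 2%N + c 5%N * y 3%N = 0.
  by have := congr1 (fun z => z ^+ (#|F| ^ 1)%N) E3; rewrite /= !pD !pM !pC fy5 !fy p0.
have E5 : c 0%N * y 5%N + c 1%N * y 0%N + c 2%N * y 1%N + c 3%N * y 2%N + c 4%N * y 3%N + c 5%N * y 4%N = 0.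
  by have := congr1 (fun z => z ^+ (#|F| ^ 1)%N) E4; rewrite /= !pD !pM !pC fy5 !fy p0.
pose W := [tuple - y 0%N; - y 1%N; - y 2%N; - y 3%N; - y 4%N; - y 5%N].
have We : (W : seq L) = map (fun j => - y j) (iota 0 6) by [].
have uW : uniq W.
  rewrite We map_inj_in_uniq ?iota_uniq // => i j; rewrite !mem_iota !add0n /y => hi hj /oppr_inj e.
  case: (ltngtP i j) => // h.
    by move: (yneq i j); rewrite h hj e eqxx => /(_ isT).
  by move: (yneq j i); rewrite h hi e eqxx => /(_ isT).
have rW : all (root ('X^6 - 'X^5 + (in_alg L a)%:P)) W.
  apply/allP => z hz; have : z \in map (fun j => - y j) (iota 0 6) by rewrite -We.
  case/mapP => j _ ->; rewrite rootE !hornerE; apply/eqP; rewrite -(yroot j) /y; ring.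
have G : \prod_(z <- W) ('X - z%:P) = 'X^6 - 'X^5 + (in_alg L a)%:P.
  have szg : size ('X^6 - 'X^5 + (in_alg L a)%:P) = (size W).+1 by rewrite size_g size_tuple.
  by rewrite [RHS](all_roots_prod_XsubC szg rW) ?uniq_rootsE // lead_g scale1r.
have hv : forall i : 'I_6, (mesym 6 L i.+1).@[tnth W] = in_alg L (vv a i).
  move=> i; have h := mroots_coeff W (@Ordinal 7 i.+1 (ltn_ord i)).
  rewrite G /= in h; apply: (inv_inj (signrMK i.+1)); rewrite -h.
  clear h; case: i => [[|[|[|[|[|[|//]]]]]] hi]; rewrite /vv /= !coefD !coefN !coefXn !coefC /= ?scale1r ?scale0r; ring.
have tW j : (j < 6)%N -> tnth W (inord j) = - y j.
  by move=> hj; rewrite (tnth_nth 0) inordK //; case: j hj => [|[|[|[|[|[|//]]]]]].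
have hS : y 0%N + y 1%N + y 2%N + y 3%N + y 4%N + y 5%N != 0.
  have h1 := hv ord0; rewrite mesym1E rmorph_sum /= in h1.
  rewrite (eq_bigr (fun i : 'I_6 => tnth W (inord i))) in h1; last first.
    by move=> i _; rewrite mevalXU inord_val.
  rewrite -(big_mkord xpredT (fun i => tnth W (inord i))) /index_iota /= !big_cons big_nil in h1.
  rewrite !tW // /vv /= scale1r in h1.
  apply/eqP => hs; move: (oner_neq0 L); rewrite -h1.
  rewrite (_ : _ + _ = - (y 0%N + y 1%N + y 2%N + y 3%N + y 4%N + y 5%N)); last by ring.
  by rewrite hs oppr0 eqxx.
have [e2 e3 e6] : [/\ evalZ t2 (vv a) != 0, evalZ t3 (vv a) != 0 & evalZ t6 (vv a) != 0].
  by move: hne; rewrite !mulf_eq0 !negb_or => /andP [/andP [-> ->] ->].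
have hQ2 : Q2 (y 0%N) (y 1%N) (y 2%N) (y 3%N) (y 4%N) (y 5%N) != 0.
  apply/eqP => hq; move/eqP: e2; apply.
  apply: (@eval_theta F L (tnth W) (vv a) 2 t2 (P2 int) PsiY_2' ht2 hv).
  rewrite mapP2 evP2 !tW //.
  transitivity (- Q2 (y 0%N) (y 1%N) (y 2%N) (y 3%N) (y 4%N) (y 5%N)); first by rewrite /Q2; ring.
  by rewrite hq oppr0.
have hQ3 : Q3 (y 0%N) (y 1%N) (y 2%N) (y 3%N) (y 4%N) (y 5%N) != 0.
  apply/eqP => hq; move/eqP: e3; apply.
  apply: (@eval_theta F L (tnth W) (vv a) 3 t3 (P3 int) PsiY_3' ht3 hv).
  rewrite mapP3 evP3 !tW //.
  transitivity (Q3 (y 0%N) (y 1%N) (y 2%N) (y 3%N) (y 4%N) (y 5%N)); first by rewrite /Q3; ring.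
  by rewrite hq.
have hQ6 : Q6 (y 0%N) (y 1%N) (y 2%N) (y 3%N) (y 4%N) (y 5%N) != 0.
  apply/eqP => hq; move/eqP: e6; apply.
  apply: (@eval_theta F L (tnth W) (vv a) 6 t6 (P6 int) PsiY_6' ht6 hv).
  rewrite mapP6 evP6 !tW //.
  transitivity (Q6 (y 0%N) (y 1%N) (y 2%N) (y 3%N) (y 4%N) (y 5%N)); first by rewrite /Q6; ring.
  by rewrite hq.
have two := two_neq0 F L p hchar hp5.
have [[c0 c1 c2] [c3 c4 c5]] := @lin6 L _ _ _ _ _ _ _ _ _ _ _ _ two hS hQ2 hQ3 hQ6 E0 E1 E2 E3 E4 E5.
move=> i; rewrite -(inord_val i); case: i => [[|[|[|[|[|[|//]]]]]] hi] /=.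
all: apply/eqP; rewrite -(fmorph_eq0 (in_alg L)); apply/eqP.
- exact: c0.
- exact: c1.
- exact: c2.
- exact: c3.
- exact: c4.
- exact: c5.
Qed.
End Main.

Theorem theorem3p1 (F : finFieldType) (p : nat) (a : F)
  (hchar : p \in [pchar F]) (hp5 : (5 <= p)%N)
  (hirr : irreducible_poly ('X^6 + 'X^5 + a%:P))
  (t2 t3 t6 : {mpoly int[6]})
  (ht2 : is_theta 6 2 t2) (ht3 : is_theta 6 3 t3) (ht6 : is_theta 6 6 t6)
  (hne : let v := fun i : 'I_6 => [:: 1; 0; 0; 0; 0; a]`_i in
         evalZ t2 v * evalZ t3 v * evalZ t6 v != 0) :
  normal_poly ('X^6 + 'X^5 + a%:P).
Proof.
split.
- by rewrite monicE lead_f.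
- exact: hirr.
- move=> L rs hrs.
  exact: (@main_free F p a hchar hp5 hirr t2 t3 t6 ht2 ht3 ht6 hne L rs hrs).
Qed.
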